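(* Let $(P_1,\dots,P_J)$ and $(P^*_1,\dots,P^*_J)$ be two stochastic demand systems for the budget planes $\mathcal{B}_1,\dots,\mathcal{B}_J$ such that $P_j(x)=P^*_j(x)$ for every $j\in\{1,\dots,J\}$ and every patch $x\subseteq \mathcal{B}_j$. Then $(P_1,\dots,P_J)$ is stochastically rationalizable if and only if $(P^*_1,\dots,P^*_J)$ is stochastically rationalizable. In particular, this applies when $(P^*_1,\dots,P^*_J)$ is concentrated on the fixed representatives, i.e. when each $P^*_j$ assigns probability $P_j(x)$ to the representative point $y^*(x)$ of each patch $x\subseteq\mathcal{B}_j$.
   Context: Fix integers $K\ge 1$ (number of goods) and $J\ge 1$, price vectors $p_1,\dots,p_J\in\mathbf{R}^K_{++}$, and budget planes $\mathcal{B}_j=\{y\in\mathbf{R}^K_+: p_j'y=1\}$. A point $x$ is on, strictly above, or strictly below $\mathcal{B}_j$ according as $p_j'x=1$, $p_j'x>1$, or $p_j'x<1$. A (nonstochastic) demand vector is $d=(d_1,\dots,d_J)\in\mathcal{B}_1\times\cdots\times\mathcal{B}_J$; it is rationalizable if there is a utility function $u:\mathbf{R}^K_+\to\mathbf{R}$, strictly increasing (''more is better''), with $d_j\in\arg\max_{x\in\mathcal{B}_j}u(x)$ for every $j$. A stochastic demand system is a tuple $(P_1,\dots,P_J)$ where $P_j$ is a probability distribution on $\mathcal{B}_j$; it is stochastically rationalizable if there is a probability distribution on $\mathcal{B}_1\times\cdots\times\mathcal{B}_J$, concentrated on the set of rationalizable demand vectors, whose $j$-th marginal is $P_j$ for every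 $j$ (equivalently, the $P_j$ are the distributions of demand on $\mathcal{B}_j$ generated by a population distribution over utility functions). Patches: the coarsest partition of $\bigcup_{j}\mathcal{B}_j$ such that each $\mathcal{B}_j$ is a union of cells and each cell is, for every $j$, entirely on, entirely strictly above, or entirely strictly below $\mathcal{B}_j$ (equivalently, two points of $\bigcup_j\mathcal{B}_j$ lie in the same patch iff they have the same vector of signs $(\mathrm{sign}(p_j'x-1))_{j=1}^J$). There are finitely many patches; for each patch $x$ fix, once and for all, a representative point $y^*(x)\in x$. *)

(* Defs.v *)
From HB Require Import structures.
From mathcomp Require Import all_boot all_order all_algebra.
From mathcomp Require Import all_classical all_reals all_analysis.
Import Order.TTheory GRing.Theory Num.Theory.
Import numFieldNormedType.Exports.

Set Implicit Arguments.
Unset Strict Implicit.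
Unset Printing Implicit Defensive.

Local Open Scope classical_set_scope.
Local Open Scope ring_scope.

Definition goods (R : realType) (K : nat) :=
  g_sigma_algebraType (open : set_system 'rV[R]_K).

(* Space of demand vectors (d_1,...,d_J), d_j = row j, i.e. (R^K)^J,
   with its Borel sigma-algebra (= product Borel sigma-algebra). *)
Definition demands (R : realType) (J K : nat) :=
  g_sigma_algebraType (open : set_system 'M[R]_(J, K)).

Definition dotp (R : realType) (K : nat) (p x : 'rV[R]_K) : R :=
  \sum_(i < K) p 0 i * x 0 i.

Definition nonneg (R : realType) (K : nat) (x : 'rV[R]_K) : Prop :=
  forall i, 0 <= x 0 i.

Definition strictly_pos (R : realType) (K : nat) (x : 'rV[R]_K) : Prop :=
  forall i, 0 < x 0 i.

Definition budget (R : realType) (J K : nat) (p : 'I_J -> 'rV[R]_K) (j : 'I_J)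
  : set 'rV[R]_K := [set y | nonneg y /\ dotp (p j) y = 1].

Definition more_is_better (R : realType) (K : nat) (u : 'rV[R]_K -> R) : Prop :=
  forall x y, nonneg x -> nonneg y -> (forall i, x 0 i <= y 0 i) -> x <> y ->
    u x < u y.

Definition rationalizable (R : realType) (J K : nat) (p : 'I_J -> 'rV[R]_K)
  (d : 'M[R]_(J, K)) : Prop :=
  exists u : 'rV[R]_K -> R, more_is_better u /\
    forall j, budget p j (row j d) /\
      forall x, budget p j x -> u x <= u (row j d).

Definition stoch_demand_system (R : realType) (J K : nat)
  (p : 'I_J -> 'rV[R]_K) (P : 'I_J -> probability (goods R K) R) : Prop :=
  forall j, P j (budget p j : set (goods R K)) = 1%E.

Definition stoch_rationalizable (R : realType) (J K : nat)
  (p : 'I_J -> 'rV[R]_K) (P : 'I_J -> probability (goods R K) R) : Prop :=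
  exists mu : probability (demands R J K) R,
    (exists A : set (demands R J K),
        measurable A /\ A `<=` rationalizable p /\ mu A = 1%E) /\
    forall (j : 'I_J) (S : set (goods R K)), measurable S ->
      mu ((fun d : demands R J K => (row j d : goods R K)) @^-1` S) = P j S.

Definition budget_union (R : realType) (J K : nat) (p : 'I_J -> 'rV[R]_K)
  : set 'rV[R]_K := [set y | exists j, budget p j y].

Definition sign_vector (R : realType) (J K : nat) (p : 'I_J -> 'rV[R]_K)
  (y : 'rV[R]_K) : 'I_J -> R := fun j => Num.sg (dotp (p j) y - 1).

Definition patch_of (R : realType) (J K : nat) (p : 'I_J -> 'rV[R]_K)
  (y : 'rV[R]_K) : set 'rV[R]_K :=
  [set z | budget_union p z /\ sign_vector p z = sign_vector p y].

Definition is_patch (R : realType) (J K : nat) (p : 'I_J -> 'rV[R]_K)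
  (x : set 'rV[R]_K) : Prop :=
  exists y, budget_union p y /\ x = patch_of p y.

(* Main.v *)
Require Import Defs.
From HB Require Import structures.
From mathcomp Require Import all_boot all_order all_algebra.
From mathcomp Require Import all_classical all_reals all_analysis.
From mathcomp Require Import ring lra.
Import Order.TTheory GRing.Theory Num.Theory.
Import numFieldNormedType.Exports.
Set Implicit Arguments.
Unset Strict Implicit.
Unset Printing Implicit Defensive.
Local Open Scope classical_set_scope.
Local Open Scope ring_scope.

Lemma bigsetI_memP (I : eqType) T (r : seq I) (F : I -> set T) x :
  (\big[setI/setT]_(i <- r) F i) x <-> (forall i, i \in r -> F i x).
Proof.
elim: r => [|a r IH]; first by rewrite big_nil; split.
rewrite big_cons; split.
  by move=> [Fa /IH H] i; rewrite inE => /predU1P[->//|]; exact: H.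
by move=> H; split; [apply: H; rewrite inE eqxx | apply/IH => i ir; apply: H; rewrite inE ir orbT].
Qed.

Section S.
Variable R : realType.

Definition MX (m n : nat) := g_sigma_algebraType (open : set_system 'M[R]_(m, n)).

Lemma coord_meas m n i j :
  measurable_fun [set: MX m n] (fun M : MX m n => M i j : R).
Proof.
apply: (measurability _ (measurable_realfun.RGenOpens.measurableE R)).
move=> _ [_ [a [b ->]] <-]; apply: sub_sigma_algebra; rewrite setTI.
have := @coord_continuous R m n i j.
move/continuousP; apply; exact: interval_open.
Qed.

Definition mxbox m n (z : 'M[rat]_(m, n) * rat) : set 'M[R]_(m, n) :=
  [set A | forall i j, `|A i j - ratr (z.1 i j)| < ratr z.2].

Lemma open_cover m n (U : set 'M[R]_(m, n)) : open U ->
  U = \bigcup_(l in [set: nat])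
    (match @unpickle ('M[rat]_(m, n) * rat)%type l with
     | Some z => if `[< @mxbox m n z `<=` U >] then @mxbox m n z else set0
     | None => set0 end).
Proof.
move=> oU; apply/seteqP; split; last first.
  move=> A [l _]; case: (unpickle l) => [z|//].
  by case: ifPn => [/asboolP zU /zU|].
move=> A UA.
have : nbhs A U by apply: open_nbhs_nbhs; split.
rewrite -filter_from_ballE => -[e /= e0 eU].
have [r] : exists r : rat, ratr r \in `]0, e / 2[.
  by apply: rat_in_itvoo; rewrite divr_gt0.
rewrite in_itv /= => /andP[r0 re].
have /choice[f fP] : forall ij : 'I_m * 'I_n, exists q : rat,
    ratr q \in `](A ij.1 ij.2 - ratr r), (A ij.1 ij.2 + ratr r)[.
  move=> ij; apply: rat_in_itvoo; by rewrite ltrBlDr -addrA ltrDl addr_gt0.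
pose c := \matrix_(i, j) f (i, j).
have Abox : @mxbox m n (c, r) A.
  move=> i j /=; rewrite mxE; have := fP (i, j); rewrite in_itv /= => /andP[h1 h2].
  rewrite ltr_norml; apply/andP; split; lra.
have boxU : @mxbox m n (c, r) `<=` U.
  move=> B Bb; apply: eU; split => // i j.
  have h1 := Abox i j; have h2 := Bb i j; rewrite /= in h1 h2.
  rewrite /= -/(ball _ _ _) /ball /=.
  rewrite (le_lt_trans (ler_distD (ratr (c i j)) _ _)) //.
  rewrite (lt_le_trans (ltrD h1 (_ : `|ratr (c i j) - B i j| < ratr r))) //.
    by rewrite distrC.
  by rewrite -mulr2n -mulr_natr -ler_pdivlMr // ltW.
exists (pickle (c, r)) => //; rewrite pickleK.
by case: ifPn => [//|/asboolPn]; done.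
Qed.

Lemma mx_meas d (T : measurableType d) m n (H : T -> MX m n) :
  (forall i j, measurable_fun [set: T] (fun w => (H w : 'M[R]_(m, n)) i j : R)) ->
  measurable_fun [set: T] H.
Proof.
move=> mH.
have e : @measurable _ (MX m n) = <<s (open : set_system 'M[R]_(m, n)) >> by [].
apply: (measurability _ e).
move=> _ [U oU <-]; rewrite (open_cover oU) preimage_bigcup setTI.
apply: bigcupT_measurable => l.
case: unpickle => [z|]; last by rewrite preimage_set0.
case: ifPn => _; last by rewrite preimage_set0.
have -> : H @^-1` @mxbox m n z = \big[setI/setT]_(ij : ('I_m * 'I_n)%type)
   ((fun w => (H w : 'M[R]_(m, n)) ij.1 ij.2) @^-1`
      `](ratr (z.1 ij.1 ij.2) - ratr z.2), (ratr (z.1 ij.1 ij.2) + ratr z.2)[%classic).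
  apply/seteqP; split => w.
    move=> hw; apply/bigsetI_memP => ij _ /=; rewrite in_itv /=.
    have := hw ij.1 ij.2; rewrite ltr_norml => /andP[? ?]; apply/andP; split; lra.
  move/bigsetI_memP => hw i j; have := hw (i, j) (mem_index_enum _).
  rewrite /= in_itv /= ltr_norml => /andP[? ?]; apply/andP; split; lra.
apply: bigsetI_measurable => ij _; rewrite -[X in measurable X]setTI.
exact: mH.
Qed.


Lemma row_meas n K (j : 'I_n) :
  measurable_fun [set: demands R n K] (fun d : demands R n K => (row j d : goods R K)).
Proof.
apply: (@mx_meas _ (demands R n K) 1 K) => i k /=.
by under eq_fun do rewrite mxE; exact: coord_meas.
Qed.

Lemma row_pre_meas n K (j : 'I_n) (S : set (goods R K)) : measurable S ->
  measurable ((fun d : demands R n K => (row j d : goods R K)) @^-1` S).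
Proof. by move=> mS; rewrite -[X in measurable X]setTI; exact: row_meas. Qed.

Definition ext_row n K (w : (demands R n K * goods R K)%type) : demands R n.+1 K :=
  \matrix_(i, k) match unlift ord_max i with
                 | Some i' => (w.1 : 'M[R]_(n, K)) i' k
                 | None => (w.2 : 'rV[R]_K) 0 k end.

Lemma ext_row_meas n K : measurable_fun [set: (demands R n K * goods R K)%type] (@ext_row n K).
Proof.
apply: (@mx_meas _ _ n.+1 K) => i k /=.
under eq_fun do rewrite mxE.
case: (unlift ord_max i) => [i'|].
  exact: (measurableT_comp (@coord_meas n K i' k) measurable_fst).
exact: (measurableT_comp (@coord_meas 1 K 0 k) measurable_snd).
Qed.

Lemma prod_exists n K (Q : 'I_n -> probability (goods R K) R) :
  exists nu : probability (demands R n K) R, forall j S, measurable S ->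
    nu ((fun d : demands R n K => (row j d : goods R K)) @^-1` S) = Q j S.
Proof.
elim: n Q => [|n IH] Q.
  exists (@dirac _ (demands R 0 K) 0 R).
  by move=> -[].


have [nu Hnu] := IH (fun j => Q (lift ord_max j)).
pose X := mfun_Sub (mem_set (@ext_row_meas n K) : _ \in mfun).
exists (distribution (nu \x Q ord_max)%E X) => j S mS.
rewrite /distribution /pushforward /=.
case: (unliftP ord_max j) => [j'|] ->.
  have -> : @ext_row n K @^-1` ((fun d : demands R n.+1 K => (row (lift ord_max j') d : goods R K)) @^-1` S)
     = ((fun d : demands R n K => (row j' d : goods R K)) @^-1` S) `*` setT.
    apply/seteqP; split => -[a b] /=.
      have -> : row (lift ord_max j') (@ext_row n K (a, b)) = row j' a.
        by apply/rowP => k; rewrite !mxE liftK.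
      by [].
    move=> [h _]; have -> : row (lift ord_max j') (@ext_row n K (a, b)) = row j' a.
      by apply/rowP => k; rewrite !mxE liftK.
    by [].
  rewrite product_measure1E //; last exact: row_pre_meas.
  rewrite [X in (_ * X)%E](_ : _ = 1%E); last exact: probability_setT.
  by rewrite mule1; exact: Hnu.
have -> : @ext_row n K @^-1` ((fun d : demands R n.+1 K => (row ord_max d : goods R K)) @^-1` S)
     = setT `*` S.
  apply/seteqP; split => -[a b] /=.
    have -> : row ord_max (@ext_row n K (a, b)) = b.
      by apply/rowP => k; rewrite !mxE unlift_none.
    by [].
  move=> [_ h]; have -> : row ord_max (@ext_row n K (a, b)) = b.
    by apply/rowP => k; rewrite !mxE unlift_none.
  by [].
rewrite product_measure1E //.
rewrite [X in (X * _)%E](_ : _ = 1%E); last exact: probability_setT.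
by rewrite mul1e.
Qed.

Section D.
Variables (J K : nat) (hJ : (0 < J)%N) (hK : (0 < K)%N).
Variables (p : 'I_J -> 'rV[R]_K) (hp : forall j, strictly_pos (p j)).

Lemma dotp_ge0 (q x : 'rV[R]_K) : strictly_pos q -> nonneg x -> 0 <= dotp q x.
Proof. by move=> hq hx; apply: sumr_ge0 => i _; rewrite mulr_ge0 // ltW. Qed.

Lemma dotp_lt (q x y : 'rV[R]_K) : strictly_pos q ->
  (forall i, x 0 i <= y 0 i) -> x <> y -> dotp q x < dotp q y.
Proof.
move=> hq le xy.
have [i0 hi0] : exists i, x 0 i < y 0 i.
  apply/not_existsP => H; apply: xy; apply/rowP => i.
  apply/eqP; rewrite eq_le le /= leNgt; apply/negP => h; exact: (H i).
rewrite /dotp (bigD1 i0) //= [X in _ < X](bigD1 i0) //=.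
apply: ltr_leD; first by rewrite ltr_pM2l.
by apply: ler_sum => i _; rewrite ler_pM2l.
Qed.

Lemma rat_transfer (d d' : 'M[R]_(J, K)) :
  rationalizable p d -> (forall j, nonneg (row j d')) ->
  (forall j k, (dotp (p k) (row j d') < 1) = (dotp (p k) (row j d) < 1) /\
               (dotp (p k) (row j d') == 1) = (dotp (p k) (row j d) == 1)) ->
  rationalizable p d'.
Proof.
move=> [u [mono H]] nn' sgn.
pose U j := u (row j d).
have F1 j k : dotp (p k) (row j d) = 1 -> U j <= U k.
  by move=> h; apply: (proj2 (H k)); split => //; exact: (proj1 (proj1 (H j))).
have F2 j k : dotp (p k) (row j d) < 1 -> U j < U k.
  move=> h; pose i0 := Ordinal hK.
  pose c := (1 - dotp (p k) (row j d)) / p k 0 i0.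
  have c0 : 0 < c by rewrite divr_gt0 // ?subr_gt0 //; exact: hp.
  pose y := \row_i (row j d 0 i + (if i == i0 then c else 0)).
  have nnj : nonneg (row j d) by exact: (proj1 (proj1 (H j))).
  have ley : forall i, row j d 0 i <= y 0 i.
    by move=> i; rewrite /y !mxE; case: ifP => _; [rewrite lerDl; exact: ltW | rewrite addr0].
  have nny : nonneg y by move=> i; apply: le_trans (ley i); exact: nnj.
  have dy : dotp (p k) y = 1.
    rewrite /dotp (eq_bigr (fun i => p k 0 i * row j d 0 i + p k 0 i * (if i == i0 then c else 0))); last first.
      by move=> i _; rewrite mxE mulrDr.
    rewrite big_split /= -/(dotp (p k) (row j d)) (bigD1 i0) //= big1; last first.
      by move=> i /negPf ->; rewrite mulr0.
    rewrite addr0 /c mulrC divfK; first lra.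
    by apply/lt0r_neq0; exact: hp.
  have neq : row j d <> y.
    move/(congr1 (fun z : 'rV[R]_K => z 0 i0)); rewrite /y !mxE eqxx => /eqP.
    move=> hh; have : c = 0 by lra. by move=> c00; move: c0; rewrite c00 ltxx.
  apply: (lt_le_trans (mono _ _ nnj nny ley neq)).
  by apply: (proj2 (H k)); split.
pose m k := \big[Order.max/(U k - 1)]_(j | U j < U k) U j.
have m_lt k : m k < U k by apply: bigmax_lt => //; lra.
have m_ge j k : U j < U k -> U j <= m k by move=> h; rewrite /m; apply: le_bigmax_cond.
pose Big := \sum_j `|U j|.
have Big_ge j : U j <= Big.
  apply: le_trans (ler_norm _) _; rewrite /Big (bigD1 j) //= lerDl.
  by apply: sumr_ge0 => i _.
pose phi k t := if t <= 1 then m k + t * (U k - m k) else Big + t.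
have phi1 k : phi k 1 = U k by rewrite /phi lexx; ring.
have phi_inc k t1 t2 : t1 < t2 -> phi k t1 < phi k t2.
  move=> t12; have := m_lt k; have := Big_ge k; rewrite /phi.
  case: ifPn => h1; case: ifPn => h2 ha hb.
  - nra.
  - rewrite -ltNge in h2; nra.
  - rewrite -ltNge in h1; lra.
  - lra.
pose k0 := Ordinal hJ.
pose u' (x : 'rV[R]_K) := let kx := [arg min_(k < k0) phi k (dotp (p k) x)]%O in
                          phi kx (dotp (p kx) x).
have u'_le x k : u' x <= phi k (dotp (p k) x).
  by rewrite /u'; case: arg_minP => // i _ Hi; apply: Hi.
have u'_ex x : exists k, u' x = phi k (dotp (p k) x) by exists [arg min_(k < k0) phi k (dotp (p k) x)]%O.
exists u'; split.
  move=> x y nx ny le xy; have [k ->] := u'_ex y.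
  apply: (le_lt_trans (u'_le x k)); apply: phi_inc; exact: dotp_lt.
move=> j; have [l1 l2] := sgn j j.
have dj : dotp (p j) (row j d) = 1 by exact: (proj2 (proj1 (H j))).
have dj' : dotp (p j) (row j d') = 1 by apply/eqP; rewrite l2 dj.
split; first by split.
move=> x [nx dx].
apply: (le_trans (u'_le x j)); rewrite dx phi1.
have [k ->] := u'_ex (row j d').
have [s1 s2] := sgn j k.
have t0 : 0 <= dotp (p k) (row j d') by apply: dotp_ge0.
have := m_lt k; have := Big_ge j; rewrite /phi.
case: ifPn => ht ha hb.
  case: (ltrgtP (dotp (p k) (row j d')) 1) => [h|h|h].
  - have h' : dotp (p k) (row j d) < 1 by rewrite -s1.
    have := m_ge _ _ (F2 _ _ h'); nra.
  - by move: ht; rewrite leNgt h.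
  - have h' : dotp (p k) (row j d) = 1 by apply/eqP; rewrite -s2 h.
    have := F1 _ _ h'; rewrite h; lra.
rewrite -ltNge in ht; lra.
Qed.
End D.


Lemma bigsetU_memP (I : eqType) T (r : seq I) (F : I -> set T) x :
  (\big[setU/set0]_(i <- r) F i) x <-> (exists2 i, i \in r & F i x).
Proof.
elim: r => [|a r IH]; first by rewrite big_nil; split => // -[].
rewrite big_cons; split.
  case=> [Fa|/IH [i ir Fi]]; first by exists a => //; rewrite inE eqxx.
  by exists i => //; rewrite inE ir orbT.
move=> [i]; rewrite inE => /predU1P[-> Fa|ir Fi]; first by left.
by right; apply/IH; exists i.
Qed.

Section meas_lemmas.
Context d (T : measurableType d).
Local Open Scope ereal_scope.

Lemma measure_bigU (mu : {measure set T -> \bar R}) (I : eqType) (r : seq I) (F : I -> set T) :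
  uniq r -> (forall i, measurable (F i)) ->
  (forall i j, i != j -> F i `&` F j = set0) ->
  mu (\big[setU/set0]_(i <- r) F i) = \sum_(i <- r) mu (F i).
Proof.
move=> + mF dF; elim: r => [|a r IH]; first by rewrite !big_nil measure0.
rewrite /= => /andP[ar ur]; rewrite !big_cons measureU //.
- by congr (_ + _)%E; exact: IH.
- by apply: bigsetU_measurable.
apply/seteqP; split => // x [Fa /bigsetU_memP [i ir Fi]].
have : a != i by apply/eqP => ai; move: ar; rewrite ai ir.
by move/dF => /seteqP[+ _] => /(_ x (conj Fa Fi)).
Qed.

Lemma measure_bigU_le (mu : {measure set T -> \bar R}) (I : eqType) (r : seq I) (F : I -> set T) :
  (forall i, measurable (F i)) ->
  mu (\big[setU/set0]_(i <- r) F i) <= \sum_(i <- r) mu (F i).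
Proof.
move=> mF; elim: r => [|a r IH]; first by rewrite !big_nil measure0.
rewrite !big_cons; apply: le_trans (measureU2 _ _ _) _ => //.
  exact: bigsetU_measurable.
by apply: leeD.
Qed.
End meas_lemmas.

Section Core.
Variables (J K : nat) (p : 'I_J -> 'rV[R]_K).

Definition C := {ffun 'I_J -> bool * bool}.
Definition code (y : 'rV[R]_K) : C :=
  [ffun k => (dotp (p k) y < 1, dotp (p k) y == 1)].
Definition Pat (s : C) : set (goods R K) := [set y | code y = s].

Lemma dotp_meas (q : 'rV[R]_K) : measurable_fun [set: goods R K] (dotp q).
Proof.
apply: measurable_sum => i; apply: measurable_realfun.measurable_funM => //.
exact: (@coord_meas 1 K 0 i).
Qed.

Lemma Pat_meas s : measurable (Pat s).
Proof.
have -> : Pat s = \big[setI/setT]_(k : 'I_J)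
    ([set y : goods R K | (dotp (p k) y < 1) = (s k).1] `&`
     [set y : goods R K | (dotp (p k) y == 1) = (s k).2]).
  apply/seteqP; split => y.
    move=> hy; apply/bigsetI_memP => k _; rewrite /= -hy ffunE; by split.
  move/bigsetI_memP => hy; apply/ffunP => k; rewrite ffunE.
  by have [/= -> ->] := hy k (mem_index_enum _); case: (s k).
apply: bigsetI_measurable => k _; apply: measurableI.
  rewrite -[X in measurable X]setTI.
  have mf := measurable_realfun.measurable_fun_ltr (dotp_meas (p k)) (@measurable_cst _ _ (goods R K) R setT 1).
  exact: (mf measurableT [set (s k).1] I).
rewrite -[X in measurable X]setTI.
have mf := measurable_realfun.measurable_fun_eqr (dotp_meas (p k)) (@measurable_cst _ _ (goods R K) R setT 1).
exact: (mf measurableT [set (s k).2] I).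
Qed.

Lemma mnormE_gen d (T : measurableType d) (mu : {measure set T -> \bar R}) (P : probability T R) U :
  mnormalize mu P U = if (mu setT == 0)%E || (mu setT == +oo)%E then P U else (mu U * ((fine (mu setT))^-1)%:E)%E.
Proof. by rewrite /mnormalize /=; case: ifP. Qed.

Definition Qc (Pst : probability (goods R K) R) (s : C) : probability (goods R K) R :=
  mnormalize (mrestr Pst (Pat_meas s)) Pst.

Lemma KF (P Pst : probability (goods R K) R) s S : measurable S ->
  P (Pat s) = Pst (Pat s) ->
  (P (Pat s) * Qc Pst s S = Pst (S `&` Pat s))%E.
Proof.
move=> mS h.
pose mu : {measure set (goods R K) -> \bar R} := mrestr Pst (Pat_meas s).
have QE : Qc Pst s S = if (mu setT == 0)%E || (mu setT == +oo)%E then Pst S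
   else (mu S * ((fine (mu setT))^-1)%:E)%E by exact: mnormE_gen.
have e1 : mu setT = Pst (Pat s).
  by transitivity (Pst (setT `&` Pat s)); [by [] | by rewrite setTI].
have e2 : mu S = Pst (S `&` Pat s) by [].
rewrite QE e1 e2 h.

have fin : Pst (Pat s) \is a fin_num by apply: fin_num_measure; exact: Pat_meas.
case: ifPn => [/orP[/eqP z | /eqP inf]| H].
- rewrite z mul0e; apply/esym/eqP; rewrite eq_le measure_ge0 andbT -z.
  apply: le_measure; [rewrite inE; apply: measurableI => //; exact: Pat_meas | rewrite inE; exact: Pat_meas | by move=> x []].
- by move: fin; rewrite inf.
rewrite negb_or in H; case/andP: H => H1 H2.
rewrite muleCA -{1}(fineK fin) -EFinM divff ?mule1 //.
by rewrite fine_eq0.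
Qed.
End Core.

Lemma prob_compl d (T : measurableType d) (Q : probability T R) (A : set T) :
  measurable A -> Q (~` A) = 0%E -> Q A = 1%E.
Proof.
move=> mA; rewrite probability_setC //.
have fin : Q A \is a fin_num by exact: fin_num_measure.
rewrite -(fineK fin) -EFinB => /eqP; rewrite eqe subr_eq0 => /eqP <-.
by [].
Qed.

Lemma prob_compl0 d (T : measurableType d) (Q : probability T R) (A : set T) :
  measurable A -> Q A = 1%E -> Q (~` A) = 0%E.
Proof. by move=> mA h; rewrite probability_setC // h subee. Qed.

Lemma meas_piecewise d (T0 : measurableType d) (I : finType) (c : T0 -> I)
    (g : I -> T0 -> R) :
  (forall i, measurable (c @^-1` [set i])) ->
  (forall i, measurable_fun [set: T0] (g i)) ->
  measurable_fun [set: T0] (fun w => g (c w) w).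
Proof.
move=> mc mg _ B mB; rewrite setTI.
have -> : (fun w => g (c w) w) @^-1` B =
    \big[setU/set0]_(i : I) (c @^-1` [set i] `&` g i @^-1` B).
  apply/seteqP; split => w.
    by move=> h; apply/bigsetU_memP; exists (c w) => //; exact: mem_index_enum.
  by move/bigsetU_memP => [i _ [/= ci gi]]; rewrite /= ci.
apply: bigsetU_measurable => i _; apply: measurableI => //.
by rewrite -[X in measurable X]setTI; exact: mg.
Qed.

Section Core2.
Variables (J K : nat) (hJ : (0 < J)%N) (hK : (0 < K)%N).
Variables (p : 'I_J -> 'rV[R]_K) (hp : forall j, strictly_pos (p j)).

Local Notation C := (C J).
Local Notation code := (code p).
Local Notation Pat := (Pat p).
Local Notation rowp j := (fun d : demands R _ K => (row j d : goods R K)).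

Lemma NN_meas : measurable ([set y | nonneg y] : set (goods R K)).
Proof.
have -> : ([set y | nonneg y] : set (goods R K)) =
    \big[setI/setT]_(i : 'I_K) ((fun y : goods R K => (y : 'rV[R]_K) 0 i) @^-1` `[0, +oo[%classic).
  apply/seteqP; split => y.
    by move=> h; apply/bigsetI_memP => i _ /=; rewrite in_itv /= andbT; exact: h.
  by move/bigsetI_memP => h i; have := h i (mem_index_enum _); rewrite /= in_itv /= andbT.
apply: bigsetI_measurable => i _; rewrite -[X in measurable X]setTI.
exact: (@coord_meas 1 K 0 i).
Qed.

Lemma core (P Pst : 'I_J -> probability (goods R K) R) :
  stoch_demand_system p Pst ->
  (forall j s, P j (Pat s) = Pst j (Pat s)) ->
  stoch_rationalizable p P -> stoch_rationalizable p Pst.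
Proof.
move=> hPst hEq [mu [[A [mA [Arat muA]]] Hmu]].
pose T := ('I_J * C)%type.
pose N := #|{: T}|.
pose idx (j : 'I_J) (s : C) : 'I_N := enum_rank ((j, s) : T).
have [nu Hnu] := prod_exists (fun i : 'I_N => Qc p (Pst (enum_val i).1) (enum_val i).2).
have Hnu' j s S : measurable S -> nu (rowp (idx j s) @^-1` S) = Qc p (Pst j) s S.
  by move=> mS; have := Hnu (idx j s) S mS; rewrite /idx enum_rankK.
pose G (w : (demands R J K * demands R N K)%type) : demands R J K :=
  \matrix_(j, k) (w.2 : 'M[R]_(N, K)) (idx j (code (row j (w.1 : 'M[R]_(J, K))))) k.
have rowG j w : row j (G w) = row (idx j (code (row j (w.1 : 'M[R]_(J, K))))) (w.2 : 'M[R]_(N, K)).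
  by apply/rowP => k; rewrite !mxE.
have mG : measurable_fun setT G.
  apply: (@mx_meas _ _ J K) => j k.
  rewrite (_ : (fun w => (G w : 'M[R]_(J, K)) j k) = (fun w =>
     (fun s w => (w.2 : 'M[R]_(N, K)) (idx j s) k) (code (row j (w.1 : 'M[R]_(J, K)))) w)); last first.
    by apply/funext => w; rewrite mxE.
  have hh := @meas_piecewise _ _ C (fun w : (demands R J K * demands R N K)%type => code (row j (w.1 : 'M[R]_(J, K))))
     (fun s w => (w.2 : 'M[R]_(N, K)) (idx j s) k).
  refine (hh _ _).
    move=> s; have := @measurable_fst _ _ (demands R J K) (demands R N K) measurableT _ (row_pre_meas j (Pat_meas p s)).
    by rewrite setTI.
  move=> s; exact: (measurableT_comp (@coord_meas N K (idx j s) k) measurable_snd).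
pose X := mfun_Sub (mem_set mG : G \in mfun).
exists (distribution (mu \x nu)%E X); split; last first.
  move=> j S mS.
  rewrite /distribution /pushforward /=.
  have pre : G @^-1` (rowp j @^-1` S) = \big[setU/set0]_(s : C)
      ((rowp j @^-1` Pat s) `*` (rowp (idx j s) @^-1` S)).
    apply/seteqP; split => -[a b] /=.
      rewrite rowG => h; apply/bigsetU_memP; exists (code (row j a)) => //.
      exact: mem_index_enum.
    move/bigsetU_memP => [s _ [/= h1 h2]]; rewrite rowG /=.
    by move: h1; rewrite /Pat /= => ->.
  rewrite pre measure_bigU; last 3 first.
  - exact: index_enum_uniq.
  - by move=> s; apply: measurableX; apply: row_pre_meas => //; exact: Pat_meas.
  - move=> s t st; apply/seteqP; split => // -[a b] [[/= h1 _] [/= h2 _]].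
    by move: st; rewrite -h1 -h2 eqxx.
  rewrite (eq_bigr (fun s => Pst j (S `&` Pat s))); last first.
    move=> s _.
    transitivity (mu (rowp j @^-1` Pat s) * nu (rowp (idx j s) @^-1` S))%E.
      apply: product_measure1E; [by apply: row_pre_meas; exact: Pat_meas | exact: row_pre_meas].
    have e1 : mu (rowp j @^-1` Pat s) = P j (Pat s) := Hmu j _ (Pat_meas p s).
    rewrite e1 (Hnu' j s S mS).
    by apply: KF => //.
  have partS : S = \big[setU/set0]_(s : C) (S `&` Pat s).
    apply/seteqP; split => y.
      by move=> h; apply/bigsetU_memP; exists (code y) => //; exact: mem_index_enum.
    by move/bigsetU_memP => [s _ []].
  transitivity (Pst j (\big[setU/set0]_(s : C) (S `&` Pat s))); last by rewrite -partS.
  rewrite measure_bigU //.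
  - exact: index_enum_uniq.
  - by move=> s; apply: measurableI => //; exact: Pat_meas.
  - move=> s t st; apply/seteqP; split => // y [[_ h1] [_ h2]].
    by move: st; rewrite -h1 -h2 eqxx.
pose codes (d : 'M[R]_(J, K)) : {ffun 'I_J -> C} := [ffun j => code (row j d)].
pose V (v : {ffun 'I_J -> C}) : bool := `[< exists d, A d /\ codes d = v >].
pose NN : set (goods R K) := [set y | nonneg y].
pose W (v : {ffun 'I_J -> C}) : set (demands R J K) :=
  if V v then \big[setI/setT]_(j : 'I_J) (rowp j @^-1` Pat (v j)) else set0.
pose Ast := (\big[setU/set0]_(v : {ffun 'I_J -> C}) W v) `&`
            \big[setI/setT]_(j : 'I_J) (rowp j @^-1` NN).
have mAst : measurable Ast.
  apply: measurableI.
    apply: bigsetU_measurable => v _; rewrite /W; case: ifP => _ //.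
    by apply: bigsetI_measurable => j _; apply: row_pre_meas; exact: Pat_meas.
  by apply: bigsetI_measurable => j _; apply: row_pre_meas; exact: NN_meas.
exists Ast; split => //; split.
  move=> d [/bigsetU_memP [v _ Wd] /bigsetI_memP hn].
  move: Wd; rewrite /W; case: ifPn => [/asboolP [d0 [Ad0 cd0]] /bigsetI_memP hv | _ //].
  apply: (rat_transfer hJ hK hp (Arat _ Ad0)).
    by move=> j; exact: (hn j (mem_index_enum _)).
  move=> j k.
  have c1 : code (row j d) = v j := hv j (mem_index_enum _).
  have c2 : code (row j d0) = v j by rewrite -cd0 ffunE.
  have := congr1 (fun f : C => f k) (etrans c1 (esym c2)); rewrite !ffunE => -[-> ->].
  by split.
apply: prob_compl => //.
rewrite /distribution /pushforward /=.
pose Bad := ((~` A) `*` setT) `|` \big[setU/set0]_(t : T)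
   ((rowp t.1 @^-1` Pat t.2) `*` (rowp (idx t.1 t.2) @^-1` (~` (Pat t.2 `&` NN)))).
have sub : G @^-1` (~` Ast) `<=` Bad.
  move=> [a b] /= nA.
  case: (pselect (A a)) => Aa; last by left.
  right; apply/bigsetU_memP; apply: contrapT => hno; apply: nA.
  have good : forall j, (Pat (code (row j a)) `&` NN) (row (idx j (code (row j a))) b).
    move=> j; apply: contrapT => hj; apply: hno; exists (j, code (row j a)).
      exact: mem_index_enum.
    by split.
  split.
    apply/bigsetU_memP; exists (codes a); first exact: mem_index_enum.
    rewrite /W ifT; last by apply/asboolP; exists a.
    apply/bigsetI_memP => j _ /=; rewrite rowG /= ffunE.
    by case: (good j).
  by apply/bigsetI_memP => j _ /=; rewrite rowG /=; case: (good j).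
have mBad : measurable Bad.
  apply: measurableU; first by apply: measurableX => //; exact: measurableC.
  apply: bigsetU_measurable => t _; apply: measurableX.
    by apply: row_pre_meas; exact: Pat_meas.
  apply: row_pre_meas; apply: measurableC; apply: measurableI; [exact: Pat_meas | exact: NN_meas].
have mpre : measurable (G @^-1` (~` Ast)).
  by rewrite -[Z in measurable Z]setTI; exact: (mG measurableT _ (measurableC mAst)).
apply/eqP; rewrite eq_le measure_ge0 andbT.
apply: (le_trans (le_measure _ _ _ sub)); rewrite ?inE //.
have bud_meas j : measurable (budget p j : set (goods R K)).
  have -> : (budget p j : set (goods R K)) = NN `&` (dotp (p j) @^-1` [set 1]) by [].
  apply: measurableI; first exact: NN_meas.
  by rewrite -[Z in measurable Z]setTI; apply: (dotp_meas (p j)) => //; exact: measurable_set1.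
have mNN : measurable NN := NN_meas.
have NN1 j : Pst j NN = 1%E.
  apply/eqP; rewrite eq_le (probability_le1 _ mNN) /=.
  rewrite -(hPst j).
  by apply: le_measure; [rewrite inE; exact: bud_meas | rewrite inE; exact: NN_meas | move=> y []].
have h1 : ((mu \x nu) ((~` A) `*` setT) = 0)%E.
  transitivity (mu (~` A) * nu setT)%E; first exact: product_measure1E (measurableC mA) measurableT.
  by rewrite (prob_compl0 mA muA) mul0e.
have h2 (t : T) : ((mu \x nu) ((rowp t.1 @^-1` Pat t.2) `*` (rowp (idx t.1 t.2) @^-1` (~` (Pat t.2 `&` NN)))) = 0)%E.
  have mS : measurable (~` (Pat t.2 `&` NN)).
    by apply: measurableC; apply: measurableI; [exact: Pat_meas | exact: NN_meas].
  transitivity (mu (rowp t.1 @^-1` Pat t.2) * nu (rowp (idx t.1 t.2) @^-1` (~` (Pat t.2 `&` NN))))%E.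
    by apply: product_measure1E; [apply: row_pre_meas; exact: Pat_meas | exact: row_pre_meas].
  have e1 : mu (rowp t.1 @^-1` Pat t.2) = P t.1 (Pat t.2) := Hmu t.1 _ (Pat_meas p t.2).
  rewrite e1 (Hnu' _ _ _ mS) KF //.
  apply/eqP; rewrite eq_le measure_ge0 andbT.
  rewrite -(prob_compl0 NN_meas (NN1 t.1)).
  apply: le_measure; rewrite ?inE //.
  - by apply: measurableI => //; exact: Pat_meas.
  - exact: measurableC NN_meas.
  - by move=> y [/= hy py]; move=> ny; apply: hy.
have hb : ((mu \x nu) Bad <= (mu \x nu) ((~` A) `*` setT) + (mu \x nu) (\big[setU/set0]_(t : T)
   ((rowp t.1 @^-1` Pat t.2) `*` (rowp (idx t.1 t.2) @^-1` (~` (Pat t.2 `&` NN))))))%E.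
  apply: measureU2; first by apply: measurableX => //; exact: measurableC.
  apply: bigsetU_measurable => t _; apply: measurableX.
    by apply: row_pre_meas; exact: Pat_meas.
  apply: row_pre_meas; apply: measurableC; apply: measurableI; [exact: Pat_meas | exact: NN_meas].
have hc : ((mu \x nu) (\big[setU/set0]_(t : T)
   ((rowp t.1 @^-1` Pat t.2) `*` (rowp (idx t.1 t.2) @^-1` (~` (Pat t.2 `&` NN))))) <=
   \sum_(t : T) (mu \x nu) ((rowp t.1 @^-1` Pat t.2) `*` (rowp (idx t.1 t.2) @^-1` (~` (Pat t.2 `&` NN)))))%E.
  apply: measure_bigU_le => t; apply: measurableX.
    by apply: row_pre_meas; exact: Pat_meas.
  apply: row_pre_meas; apply: measurableC; apply: measurableI; [exact: Pat_meas | exact: NN_meas].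
have hd : (\sum_(t : T) (mu \x nu) ((rowp t.1 @^-1` Pat t.2) `*` (rowp (idx t.1 t.2) @^-1` (~` (Pat t.2 `&` NN)))) = 0)%E.
  by apply: big1 => t _; rewrite h2.
rewrite hd in hc.
rewrite h1 add0e in hb.
exact: le_trans hb hc.
Qed.
End Core2.

Lemma sg_eq (a b : R) :
  (Num.sg (a - 1) = Num.sg (b - 1)) <-> ((a < 1) = (b < 1) /\ (a == 1) = (b == 1)).
Proof.
have sgv (x : R) : Num.sg (x - 1) = if x < 1 then -1 else if x == 1 then 0 else 1.
  case: ltrgtP => h.
  - by apply: ltr0_sg; rewrite subr_lt0.
  - by apply: gtr0_sg; rewrite subr_gt0.
  - by rewrite h subrr sgr0.
rewrite !sgv; case: ltrgtP => ha; case: ltrgtP => hb; split => //=;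
  try (by move=> -[]); try lra.
Qed.

Section Final.
Variables (J K : nat) (p : 'I_J -> 'rV[R]_K).

Lemma sign_code (y z : 'rV[R]_K) : sign_vector p z = sign_vector p y <-> code p z = code p y.
Proof.
split.
  move=> h; apply/ffunP => k; rewrite !ffunE.
  have := congr1 (fun f => f k) h; rewrite /sign_vector => /sg_eq [-> ->] //.
move=> h; apply/funext => k; rewrite /sign_vector; apply/sg_eq.
by have := congr1 (fun f : C J => f k) h; rewrite !ffunE => -[-> ->].
Qed.

Lemma measure_restr1 (Q : probability (goods R K) R) (B X : set (goods R K)) :
  measurable B -> measurable X -> Q B = 1%E -> Q X = Q (X `&` B).
Proof.
move=> mB mX QB.
transitivity (Q (X `\` B) + Q (X `&` B))%E; first exact: measureDI.
have -> : Q (X `\` B) = 0%E.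
  apply/eqP; rewrite eq_le measure_ge0 andbT -(prob_compl0 mB QB).
  by apply: le_measure; rewrite ?inE; [apply: measurableD | apply: measurableC | move=> x []].
by rewrite add0e.
Qed.

Lemma set1_meas (a : goods R K) : measurable [set a].
Proof.
have -> : [set a] = \big[setI/setT]_(i : 'I_K)
    ((fun y : goods R K => (y : 'rV[R]_K) 0 i) @^-1` [set (a : 'rV[R]_K) 0 i]).
  apply/seteqP; split => y.
    by move=> /= ->; apply/bigsetI_memP.
  move/bigsetI_memP => h; apply/rowP => i.
  exact: h i (mem_index_enum _).
apply: bigsetI_measurable => i _; rewrite -[X in measurable X]setTI.
by apply: (@coord_meas 1 K 0 i) => //; exact: measurable_set1.
Qed.

Lemma budget_meas j : measurable (budget p j : set (goods R K)).
Proof.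
have -> : (budget p j : set (goods R K)) = [set y | nonneg y] `&` (dotp (p j) @^-1` [set 1]) by [].
apply: measurableI; first exact: NN_meas.
by rewrite -[Z in measurable Z]setTI; apply: (dotp_meas (p j)) => //; exact: measurable_set1.
Qed.

Lemma Pat_budget j s y : (Pat p s `&` budget p j) y ->
  (Pat p s `&` budget p j) = patch_of p y.
Proof.
move=> [hs [ny dy]]; apply/seteqP; split => z.
  move=> [hz [nz dz]]; split; first by exists j.
  by apply/sign_code; rewrite /Pat /= in hs hz; rewrite hz hs.
move=> [[k [nz _]] /sign_code hz]; split.
  by rewrite /Pat /= in hs *; rewrite hz.
split => //; apply/eqP.
have := congr1 (fun f : C J => (f j).2) hz; rewrite !ffunE /= => ->.
by rewrite dy.
Qed.

Lemma patch_sub j y : budget p j y -> patch_of p y `<=` budget p j.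
Proof.
move=> [ny dy] z [[k [nz _]] /sign_code hz]; split => //; apply/eqP.
have := congr1 (fun f : C J => (f j).2) hz; rewrite !ffunE /= => ->.
by rewrite dy.
Qed.

Lemma Pat_partition (S : set (goods R K)) : S = \big[setU/set0]_(s : C J) (S `&` Pat p s).
Proof.
apply/seteqP; split => y.
  by move=> h; apply/bigsetU_memP; exists (code p y) => //; exact: mem_index_enum.
by move/bigsetU_memP => [s _ []].
Qed.

Lemma Pat_sum (Q : probability (goods R K) R) :
  (\sum_(s : C J) Q (Pat p s) = 1)%E.
Proof.
transitivity (Q (\big[setU/set0]_(s <- index_enum (C J)) Pat p s)).
  symmetry; apply: measure_bigU.
  - exact: index_enum_uniq.
  - by move=> s; exact: Pat_meas.
  - move=> s t st; apply/seteqP; split => // y [h1 h2].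
    by move: st; rewrite -[s]h1 -[t]h2 eqxx.
rewrite (_ : \big[setU/set0]_(s <- index_enum (C J)) Pat p s = setT); first exact: probability_setT.
apply/seteqP; split => // y _; apply/bigsetU_memP; exists (code p y) => //; exact: mem_index_enum.
Qed.
End Final.

Lemma sum_eq_le (I : finType) (a b : I -> \bar R) :
  (forall i, a i \is a fin_num) -> (forall i, b i \is a fin_num) ->
  (forall i, (a i <= b i)%E) -> (\sum_(i : I) a i = \sum_(i : I) b i)%E ->
  forall i, a i = b i.
Proof.
move=> fa fb le hs i.
have ea k : a k = (fine (a k))%:E by rewrite fineK.
have eb k : b k = (fine (b k))%:E by rewrite fineK.
have hs' : \sum_(k : I) (fine (b k) - fine (a k)) = 0.
  apply/eqP; rewrite sumrB subr_eq0; apply/eqP.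
  have := hs; rewrite (eq_bigr _ (fun k _ => eb k)) (eq_bigr _ (fun k _ => ea k)) !sumEFin.
  by move=> -[->].
have pos : forall k, predT k -> 0 <= fine (b k) - fine (a k).
  by move=> k _; rewrite subr_ge0 -lee_fin -ea -eb; exact: le.
have := @psumr_eq0P _ I predT (fun k => fine (b k) - fine (a k)) pos hs' i isT.
by move=> /eqP; rewrite subr_eq0 => /eqP h; rewrite ea eb h.
Qed.
End S.


Theorem proposition1 (R : realType) (J K : nat)
  (hJ : (0 < J)%N) (hK : (0 < K)%N)
  (p : 'I_J -> 'rV[R]_K) (hp : forall j, strictly_pos (p j))
  (P : 'I_J -> probability (goods R K) R)
  (hP : stoch_demand_system p P) :
  (forall Pstar : 'I_J -> probability (goods R K) R,
     stoch_demand_system p Pstar ->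
     (forall (j : 'I_J) (x : set 'rV[R]_K), is_patch p x -> x `<=` budget p j ->
        P j x = Pstar j x) ->
     (stoch_rationalizable p P <-> stoch_rationalizable p Pstar)) /\
  (forall ystar : set 'rV[R]_K -> 'rV[R]_K,
     (forall x, is_patch p x -> x (ystar x)) ->
     forall Pstar : 'I_J -> probability (goods R K) R,
     stoch_demand_system p Pstar ->
     (forall (j : 'I_J) (x : set 'rV[R]_K), is_patch p x -> x `<=` budget p j ->
        Pstar j [set ystar x] = P j x) ->
     (stoch_rationalizable p P <-> stoch_rationalizable p Pstar)).
Proof.
have red (Q : probability (goods R K) R) j s : Q (budget p j : set (goods R K)) = 1%E ->
    Q (Pat p s) = Q (Pat p s `&` budget p j).
  by move=> h; apply: measure_restr1 => //; [exact: budget_meas | exact: Pat_meas].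
have empty0 (Q : probability (goods R K) R) j s :
    ~ (exists y, (Pat p s `&` budget p j) y) -> Q (Pat p s `&` budget p j) = 0%E.
  by move=> h; rewrite (_ : _ `&` _ = set0) ?measure0 //; apply/seteqP; split => // y hy; apply: h; exists y.
split.
  move=> Pstar hPs hpat.
  have E j s : P j (Pat p s) = Pstar j (Pat p s).
    rewrite (red _ j s (hP j)) (red _ j s (hPs j)).
    case: (pselect (exists y, (Pat p s `&` budget p j) y)) => [[y hy]|hn]; last by rewrite !empty0.
    rewrite (Pat_budget hy); apply: hpat.
      by exists y; split; [exists j; exact: hy.2 | by []].
    exact: patch_sub hy.2.
  split; first exact: (core hJ hK hp hPs E).
  by apply: (@core _ _ _ hJ hK p hp Pstar P hP) => j s; rewrite E.
move=> ystar hy Pstar hPs hpat.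
have le j s : (P j (Pat p s) <= Pstar j (Pat p s))%E.
  rewrite (red _ j s (hP j)).
  case: (pselect (exists y, (Pat p s `&` budget p j) y)) => [[y hy']|hn]; last by rewrite !empty0.
  have ip : is_patch p (patch_of p y) by exists y; split; [exists j; exact: hy'.2 | by []].
  rewrite (Pat_budget hy') -(hpat j _ ip (patch_sub hy'.2)).
  apply: le_measure; [rewrite inE; exact: set1_meas | rewrite inE; exact: Pat_meas |].
  move=> z /= ->; have := hy _ ip; rewrite -(Pat_budget hy'); by case.
have E j s : P j (Pat p s) = Pstar j (Pat p s).
  apply: (@sum_eq_le _ _ (fun s => P j (Pat p s)) (fun s => Pstar j (Pat p s))) => //.
  - by move=> t; apply: fin_num_measure; exact: Pat_meas.
  - by move=> t; apply: fin_num_measure; exact: Pat_meas.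
  - by transitivity (1%E : \bar R); [exact: Pat_sum | symmetry; exact: Pat_sum].
split; first exact: (core hJ hK hp hPs E).
by apply: (@core _ _ _ hJ hK p hp Pstar P hP) => j s; rewrite E.
Qed.
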